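(* If $f:\mathbb{N}^d\to\mathbb{N}$ is obliviously-computable, then for every $i\in\{1,\ldots,d\}$ and $j\in\mathbb{N}$ the fixed-input restriction $f_{[\vec{x}(i)\to j]}:\mathbb{N}^d\to\mathbb{N}$ is obliviously-computable.
   Context: A chemical reaction network (CRN) is a pair $(\mathcal{S},\mathcal{R})$ of a finite set of species and a finite set of reactions $(\vec{R},\vec{P})\in\mathbb{N}^{\mathcal{S}}\times\mathbb{N}^{\mathcal{S}}$. A configuration is $\vec{C}\in\mathbb{N}^{\mathcal{S}}$; a reaction is applicable if $\vec{R}\le\vec{C}$ and yields $\vec{C}-\vec{R}+\vec{P}$; reachability is via finite sequences of applicable reactions. To compute $f:\mathbb{N}^d\to\mathbb{N}$ the CRN has input species $X_1,\ldots,X_d$, output species $Y$, leader species $L$; the initial configuration $\vec{I}_{\vec{x}}$ has $\vec{x}(i)$ copies of $X_i$, one $L$, nothing else. $\vec{C}$ is stable if all configurations reachable from it have the same count of $Y$. The CRN stably computes $f$ if for every $\vec{x}$ and every $\vec{C}$ reachable from $\vec{I}_{\vec{x}}$ some stable $\vec{O}$ reachable from $\vec{C}$ has $\vec{O}(Y)=f(\vec{x})$. The CRN is output-oblivious if $Y$ is never a reactant; $f$ is obliviously-computable if stably computed by an output-oblivious CRN. The fixed-input restriction is $f_{[\vec{x}(i)\to j]}(\vec{x})=f(\vec{x}(1),\ldots,\vec{x}(i-1),j,\vec{x}(i+1),\ldots,\vec{x}(d))$ for all $\vec{x}\in\mathbb{N}^d$. *)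

(* Defs.v *)
From mathcomp Require Import all_boot.
Set Implicit Arguments. Unset Strict Implicit. Unset Printing Implicit Defensive.

Definition config (S : finType) := {ffun S -> nat}.

(* A reaction is a pair (R, P) of reactant / product vectors. *)
Definition reaction (S : finType) := (config S * config S)%type.

Definition le_config (S : finType) (A B : config S) : Prop := forall s, A s <= B s.

Definition applicable (S : finType) (r : reaction S) (C : config S) : Prop :=
  le_config r.1 C.

Definition apply_reaction (S : finType) (r : reaction S) (C : config S) : config S :=
  [ffun s => C s - r.1 s + r.2 s].

Definition step (S : finType) (rs : seq (reaction S)) (C D : config S) : Prop :=
  exists r, r \in rs /\ applicable r C /\ D = apply_reaction r C.

Inductive reachable (S : finType) (rs : seq (reaction S)) : config S -> config S -> Prop :=
| reach_refl C : reachable rs C C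
| reach_step C D E : step rs C D -> reachable rs D E -> reachable rs C E.

Record CRN (d : nat) := {
  species : finType;
  reactions : seq (reaction species);
  inX : 'I_d -> species;
  outY : species;
  leaderL : species;
  inX_inj : injective inX;
  Y_notin_X : forall k, inX k <> outY;
  L_notin_X : forall k, inX k <> leaderL;
  Y_neq_L : outY <> leaderL
}.

Definition init_config (d : nat) (N : CRN d) (x : 'I_d -> nat) : config (species N) :=
  [ffun s => \sum_(k < d | inX N k == s) x k + (s == leaderL N)].

Definition stable (d : nat) (N : CRN d) (C : config (species N)) : Prop :=
  forall D, reachable (reactions N) C D -> D (outY N) = C (outY N).

Definition stably_computes (d : nat) (N : CRN d) (f : ('I_d -> nat) -> nat) : Prop :=
  forall (x : 'I_d -> nat) (C : config (species N)),
    reachable (reactions N) (init_config N x) C ->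
    exists O : config (species N),
      reachable (reactions N) C O /\ stable O /\ O (outY N) = f x.

Definition output_oblivious (d : nat) (N : CRN d) : Prop :=
  forall r, r \in reactions N -> r.1 (outY N) = 0.

Definition obliviously_computable (d : nat) (f : ('I_d -> nat) -> nat) : Prop :=
  exists N : CRN d, output_oblivious N /\ stably_computes N f.

Definition fix_input (d : nat) (f : ('I_d -> nat) -> nat) (i : 'I_d) (j : nat)
  : ('I_d -> nat) -> nat :=
  fun x => f (fun k => if k == i then j else x k).

(* Main.v *)
Require Import Defs.
From mathcomp Require Import all_boot zify.
Set Implicit Arguments. Unset Strict Implicit. Unset Printing Implicit Defensive.

Lemma big_option_nat (I : finType) (F : option I -> nat) :
  \sum_(u : option I) F u = F None + \sum_(k : I) F (Some k).
Proof.
by rewrite ![index_enum _]unlock [@Finite.enum in LHS]unlock /= big_cons big_map.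
Qed.

Lemma reach_trans (S : finType) (rs : seq (reaction S)) A B C :
  reachable rs A B -> reachable rs B C -> reachable rs A C.
Proof. elim=> // X Y Z st _ IH H; apply: reach_step st (IH H). Qed.

Section Constr.
Variables (d : nat) (N : CRN d) (i : 'I_d) (j : nat).

Definition TT := (species N + option 'I_d)%type.

Definition w (u : option 'I_d) (s : species N) : nat :=
  match u with
  | None => (s == leaderL N) + j * (s == inX N i)
  | Some k => (k != i) * (inX N k == s)
  end.

Definition ext (A : config (species N)) : config TT :=
  [ffun x => match x with inl s => A s | inr _ => 0 end].
Definition embr (r : reaction (species N)) : reaction TT := (ext r.1, ext r.2).
Definition conv (u : option 'I_d) : reaction TT :=
  ([ffun x => nat_of_bool (x == inr u)], ext [ffun s => w u s]).
Definition rs' := map embr (reactions N) ++ map conv (enum {: option 'I_d}).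
Definition pi (C : config TT) : config (species N) :=
  [ffun s => C (inl s) + \sum_u C (inr u) * w u s].

Lemma inX'_inj : injective (fun k : 'I_d => (inr (Some k) : TT)).
Proof. by move=> a b [->]. Qed.

Definition N' : CRN d := {|
  species := TT;
  reactions := rs';
  inX := fun k => inr (Some k);
  outY := inl (outY N);
  leaderL := inr None;
  inX_inj := inX'_inj;
  Y_notin_X := fun k => ltac:(by []);
  L_notin_X := fun k => ltac:(by []);
  Y_neq_L := ltac:(by [])
|}.

Lemma pi_step C D : step rs' C D -> reachable (reactions N) (pi C) (pi D).
Proof.
case=> r [rin [+ ->]]; rewrite mem_cat in rin.
case/orP: rin => /mapP [r0 r0in ->] app.
  apply: (@reach_step _ _ _ (apply_reaction r0 (pi C))); last first.
    have -> : pi (apply_reaction (embr r0) C) = apply_reaction r0 (pi C).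
      apply/ffunP => s; rewrite /ext /conv /apply_reaction /= !ffunE /=.
      have := app (inl s); rewrite /= /ext /conv /= !ffunE /= => h.
      under eq_bigr => u _ do rewrite /ext !ffunE /= subn0 addn0.
      by rewrite -addnBAC // addnAC.
    exact: reach_refl.
  exists r0; split => //; split => // s.
  have := app (inl s); rewrite /= /ext /conv /= !ffunE /= => h.
  exact: leq_trans h (leq_addr _ _).
have -> : pi (apply_reaction (conv r0) C) = pi C.
  apply/ffunP => s; rewrite /ext /conv /apply_reaction /= !ffunE /=.
  have := app (inr r0); rewrite /= /ext /conv /= !ffunE eqxx /= => h.
  rewrite (bigD1 r0) //= [in RHS](bigD1 r0) //= !ffunE /= eqxx /=.
  rewrite (eq_bigr (fun u => C (inr u) * w u s)); last first.
    move=> u hu; rewrite /ext !ffunE /=.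
    have -> : (inr u == inr r0 :> TT) = false by apply/eqP => -[] /eqP; apply/negP.
    by rewrite subn0 addn0.
  rewrite subn0 !addn0 mulnBl mul1n.
  have hw : w r0 s <= C (inr r0) * w r0 s by rewrite leq_pmull.
  rewrite -addnA; congr (_ + _); by rewrite addnA subnKC.
exact: reach_refl.
Qed.

Lemma pi_reach C D : reachable rs' C D -> reachable (reactions N) (pi C) (pi D).
Proof.
elim=> [X|X Y Z st _ IH]; first exact: reach_refl.
exact: reach_trans (pi_step st) IH.
Qed.

Lemma pi_ext O : pi (ext O) = O.
Proof.
apply/ffunP => s; rewrite /pi /ext !ffunE /= big1 ?addn0 // => u _.
by rewrite ffunE.
Qed.

Lemma ext_pi (C : config TT) : (forall u, C (inr u) = 0) -> C = ext (pi C).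
Proof.
move=> h; apply/ffunP => -[s|u]; rewrite /ext /pi !ffunE //=.
by rewrite big1 ?addn0 // => u _; rewrite h.
Qed.

Lemma piY (C : config TT) : pi C (outY N) = C (inl (outY N)).
Proof.
rewrite /pi ffunE big1 ?addn0 // => -[k|] _ /=.
  have hk : inX N k != outY N.
    apply/eqP => e. exact (@Y_notin_X _ N k e).
  rewrite (negbTE hk).
  by rewrite !muln0.
have h1 : outY N != leaderL N.
  by apply/eqP => e; exact: (@Y_neq_L _ N e).
have h2 : outY N != inX N i.
  by apply/eqP => e; exact: (@Y_notin_X _ N i (esym e)).
by rewrite (negbTE h1) (negbTE h2) /= !muln0.
Qed.

Lemma reach_ext A B : reachable (reactions N) A B -> reachable rs' (ext A) (ext B).
Proof.
elim=> [X|X Y Z [r [rin [app ->]]] _ IH]; first exact: reach_refl.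
apply: reach_step IH; exists (embr r); split.
  by rewrite mem_cat map_f.
split.
  by move=> [s|u]; rewrite /= /ext !ffunE //=; exact: app.
by apply/ffunP => -[s|u]; rewrite /apply_reaction /ext /= !ffunE.
Qed.

Lemma conv_in t : conv t \in rs'.
Proof. by rewrite mem_cat orbC map_f // mem_enum. Qed.

Lemma flush n (C : config TT) : \sum_u C (inr u) <= n ->
  exists C', reachable rs' C C' /\ forall u, C' (inr u) = 0.
Proof.
elim: n C => [|n IH] C hC.
  exists C; split; first exact: reach_refl.
  move=> u; apply/eqP; rewrite -leqn0; apply: leq_trans hC.
  by rewrite (bigD1 u) //= leq_addr.
have [/forallP hz|] := boolP [forall u, C (inr u) == 0].
  by exists C; split; [exact: reach_refl | move=> u; apply/eqP].
rewrite negb_forall => /existsP [t ht].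
have ht' : 0 < C (inr t) by rewrite lt0n.
set D := apply_reaction (conv t) C.
have hD : \sum_u D (inr u) < \sum_u C (inr u).
  rewrite (bigD1 t) //= [X in _ < X](bigD1 t) //= /D /apply_reaction /conv /ext !ffunE /=.
  rewrite (_ : (inr t == inr t :> TT) = true) ?eqxx //= addn0.
  rewrite (eq_bigr (fun u => C (inr u))); last first.
    move=> u hu; rewrite !ffunE /=.
    have -> : (inr u == inr t :> TT) = false by apply/eqP => -[] /eqP; apply/negP.
    by rewrite subn0 addn0.
  by rewrite ltn_add2r subn1 ltn_predL.
have [C' [r1 h1]] := IH D (leq_trans (leq_trans hD hC) (leqnn _)) .
exists C'; split => //; apply: reach_step r1.
exists (conv t); split; first exact: conv_in.
split => // x; rewrite /conv /= ffunE.
by case: eqP => [->|]. 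
Qed.

Lemma pi_init (x : 'I_d -> nat) :
  pi (init_config N' x) = init_config N (fun k => if k == i then j else x k).
Proof.
apply/ffunP => s; rewrite /pi /init_config !ffunE /= big_pred0 // add0n.
rewrite big_option_nat !ffunE /= big_pred0 // add0n mul1n.
rewrite (eq_bigr (fun k => if inX N k == s then (if k == i then 0 else x k) else 0)); last first.
  move=> k _; rewrite ffunE /= addn0 (big_pred1 k) //.
  by case: (inX N k == s); case: (k == i); rewrite /= ?muln0 ?muln1 ?mul0n.
rewrite [in RHS]big_mkcond /=.
rewrite (bigD1 i) //= [in RHS](bigD1 i) //= eqxx.
rewrite (eq_bigr (fun k => if inX N k == s then x k else 0) (P := fun k => k != i)); last first.
  by move=> k /negbTE ->.
rewrite [X in _ = _ + X + _](eq_bigr (fun k => if inX N k == s then x k else 0)); last first.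
  by move=> k /negbTE ->.
rewrite [inX N i == s]eq_sym.
case: (s == inX N i); rewrite /= ?muln1 ?muln0; rewrite add0n; set S0 := \sum_(_ < _ | _) _; lia.
Qed.
End Constr.

Theorem mainTheorem12 (d : nat) (f : ('I_d -> nat) -> nat) :
  obliviously_computable f ->
  forall (i : 'I_d) (j : nat), obliviously_computable (fix_input f i j).
Proof.
move=> [N [obl comp]] i j.
exists (N' N i j); split.
  move=> r /=; rewrite mem_cat => /orP [] /mapP [r0 r0in ->].
    by rewrite /embr /ext /= ffunE; exact: obl.
  by rewrite /conv /= ffunE.
move=> x C hC.
have [C' [r1 h1]] := @flush _ N i j _ C (leqnn _).
have hr : reachable (reactions N) (pi i j (init_config (N' N i j) x)) (pi i j C').
  exact: pi_reach (reach_trans hC r1).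
rewrite pi_init in hr.
have [O [rO [sO eO]]] := comp _ _ hr.
exists (ext O); split.
  apply: reach_trans r1 _.
  rewrite {1}(ext_pi i j h1).
  exact: reach_ext.
split.
  move=> D hD /=.
  have := pi_reach hD; rewrite pi_ext => /sO.
  by rewrite piY /ext ffunE.
by rewrite /= /ext ffunE eO.
Qed.
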